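(* There exists an integer $n_0$ such that for every integer $n\ge n_0$ there exists a regular graph on $n$ vertices that is $K_3$-saturated (that is, $\mathrm{rsat}(n,K_3)$ exists for every $n\ge n_0$).
   Context: All graphs are finite and simple. For a graph $F$, a graph $G$ is $F$-saturated if $G$ contains no copy of $F$ (as a subgraph), but adding any edge between two non-adjacent vertices of $G$ creates a copy of $F$. A graph is regular if all its vertices have the same degree. $\mathrm{rsat}(n,F)$ denotes the smallest number of edges of a regular $n$-vertex $F$-saturated graph, if such a graph exists; we say $\mathrm{rsat}(n,F)$ exists if at least one such graph exists. *)

(* Defs.v *)
From mathcomp Require Import all_boot.
Set Implicit Arguments. Unset Strict Implicit. Unset Printing Implicit Defensive.

Definition simple_graph (T : finType) (e : rel T) : Prop :=
  irreflexive e /\ symmetric e.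

Definition has_K3 (T : finType) (e : rel T) : Prop :=
  exists x y z : T, [/\ e x y, e y z & e x z].

Definition add_edge (T : finType) (e : rel T) (u v : T) : rel T :=
  fun x y => e x y || ((x == u) && (y == v)) || ((x == v) && (y == u)).

Definition K3_saturated (T : finType) (e : rel T) : Prop :=
  ~ has_K3 e /\ (forall u v : T, u != v -> ~~ e u v -> has_K3 (add_edge e u v)).

Definition regular (T : finType) (e : rel T) : Prop :=
  forall x y : T, #|[set z | e x z]| = #|[set z | e y z]|.

(* Main.v *)
Require Import Defs.
From mathcomp Require Import all_boot zify.

Definition cd (n x y : nat) := minn (x - y + (y - x)) (n - (x - y + (y - x))).
Definition ok (n L d : nat) := (L <= d) && (d <= 2 * L - 1).

Lemma cdC n x y : cd n x y = cd n y x.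
Proof. by rewrite /cd addnC. Qed.

Lemma cdE n a b : a <= b -> cd n a b = minn (b - a) (n - (b - a)).
Proof. move=> ab; rewrite /cd; have -> : a - b = 0 by lia. by rewrite add0n. Qed.

Lemma okE0 n L d : 4 * L <= n -> d < n ->
  ((L <= minn d (n - d)) && (minn d (n - d) <= 2 * L - 1)) =
  ((L <= d <= 2 * L - 1) || (L <= n - d <= 2 * L - 1)).
Proof.
move=> Ln dn; case: (leqP d (n - d)) => h;
apply/idP/idP; [move=> /andP[h1 h2]|move=> /orP[/andP[h1 h2]|/andP[h1 h2]]|move=> /andP[h1 h2]|move=> /orP[/andP[h1 h2]|/andP[h1 h2]]]; try (apply/orP); try (apply/andP); lia.
Qed.

Lemma okE n L a b : 4 * L <= n -> a <= b -> b < n -> ok n L (cd n a b) =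
  ((L <= b - a <= 2 * L - 1) || (L <= n - (b - a) <= 2 * L - 1)) .
Proof. move=> Ln ab bn; rewrite /ok cdE // okE0 //; lia. Qed.

Section S.
Variables (n L : nat).
Hypotheses (HL1 : 1 <= L) (HL2 : 6 * L <= n + 2) (HL3 : n + 3 <= 8 * L).

Lemma okL x y : x <= y -> y < n -> L <= y - x <= 2 * L - 1 -> ok n L (cd n x y).
Proof. move=> xy yn h; rewrite okE //; [by rewrite h | lia]. Qed.
Lemma okR x y : x <= y -> y < n -> L <= n - (y - x) <= 2 * L - 1 -> ok n L (cd n x y).
Proof. move=> xy yn h; rewrite okE //; [by rewrite h orbT | lia]. Qed.

Lemma mid_lt a b : a < b -> b < n -> ~~ ok n L (cd n a b) ->
  exists w, w < n /\ ok n L (cd n a w) /\ ok n L (cd n w b).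
Proof using HL1 HL2 HL3.
move=> ab bn; rewrite okE ?(ltnW ab) //; last lia.
rewrite negb_or => /andP[H1 H2].
have [d1|d1] := leqP (b - a) (L - 1).
  case: (ltnP (b + L) n) => h.
    exists (b + L); split; first by [].
    split; first by apply: okL; lia.
    by rewrite cdC; apply: okL; lia.
  exists (b + L - n); split; first lia.
  split; first by rewrite cdC; apply: okR; lia.
  by apply: okR; lia.
have [d2|d2] := leqP (n - L + 1) (b - a).
  exists (a + L); split; first lia.
  split; first by apply: okL; lia.
  by apply: okR; lia.
have d2' : 2 * L <= b - a by lia.
have d2'' : b - a <= n - 2 * L by lia.
have [d3|d3] := leqP (b - a) (4 * L - 2).
  exists (a + (b - a) %/ 2); split; first lia.
  split; first by apply: okL; lia.
  by apply: okL; lia.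
have d4 : n - 4 * L + 2 <= b - a by lia.
case: (ltnP (b + (n - (b - a)) %/ 2) n) => h.
  exists (b + (n - (b - a)) %/ 2); split; first by [].
  split; first by apply: okR; lia.
  by rewrite cdC; apply: okL; lia.
exists (b + (n - (b - a)) %/ 2 - n); split; first lia.
split; first by rewrite cdC; apply: okL; lia.
by apply: okR; lia.
Qed.

Lemma no_tri x y z : x < n -> y < n -> z < n ->
  ok n L (cd n x y) -> ok n L (cd n y z) -> ok n L (cd n x z) -> False.
Proof using HL1 HL2 HL3. rewrite /ok /cd => *. lia. Qed.
End S.

Section G.
Variables (m L : nat).
Hypotheses (HL1 : 1 <= L) (HL2 : 6 * L <= m.+1 + 2) (HL3 : m.+1 + 3 <= 8 * L).
Definition E : rel 'I_m.+1 := fun x y => ok m.+1 L (cd m.+1 x y).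

Definition rr (z : 'I_m.+1) : 'I_m.+1 := inord (if z < m then z.+1 else 0).
Lemma rrE z : nat_of_ord (rr z) = (if z < m then z.+1 else 0).
Proof. rewrite /rr inordK //; case: ifP => //. Qed.

Lemma rr_inj : injective rr.
Proof.
move=> x y h; apply: val_inj; have := congr1 (@nat_of_ord _) h; rewrite !rrE.
have := ltn_ord x; have := ltn_ord y.
case: ifP => h1; case: ifP => h2 /=; lia.
Qed.

Lemma cd_rr x z : cd m.+1 (rr x) (rr z) = cd m.+1 x z.
Proof.
rewrite !rrE /cd; have := ltn_ord x; have := ltn_ord z.
case: ifP => h1; case: ifP => h2 /=; lia.
Qed.

Lemma deg_rr x : #|[set z | E (rr x) z]| = #|[set z | E x z]|.
Proof.
rewrite -(card_preimset _ rr_inj); apply: eq_card => z.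
by rewrite !inE /E cd_rr.
Qed.

Lemma deg0 x : #|[set z | E x z]| = #|[set z | E ord0 z]|.
Proof.
move: x; suff H : forall k (x : 'I_m.+1), nat_of_ord x = k -> #|[set z | E x z]| = #|[set z | E ord0 z]|.
  by move=> x; apply: (H (nat_of_ord x)).
elim=> [|k IH] x hx.
  by have -> : x = ord0 by apply: val_inj.
have km : k < m by have := ltn_ord x; lia.
have -> : x = rr (inord k).
  by apply: val_inj; rewrite /= rrE inordK ?km //; lia.
by rewrite deg_rr; apply: IH; rewrite inordK //; lia.
Qed.

Lemma E_main : [/\ simple_graph E, regular E & K3_saturated E].
Proof.
split.
- split.
  + by move=> x; rewrite /E /ok /cd subnn /=; lia.
  + by move=> x y; rewrite /E cdC.
- by move=> x y; rewrite deg0 [RHS]deg0.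
- split.
  + move=> [x [y [z [h1 h2 h3]]]].
    have := @no_tri m.+1 L HL1 HL2 HL3 x y z.
    by apply; rewrite ?ltn_ord.

  + move=> u v uv nuv.
    have [w [wn [h1 h2]]] : exists w, w < m.+1 /\ ok m.+1 L (cd m.+1 u w) /\ ok m.+1 L (cd m.+1 w v).
      have [lt|lt|eq] := ltngtP u v.
      * exact (@mid_lt m.+1 L HL1 HL2 HL3 _ _ lt (ltn_ord v) nuv).
      * have nvu : ~~ ok m.+1 L (cd m.+1 v u) by rewrite cdC.
        have [w [wn [h1 h2]]] := @mid_lt m.+1 L HL1 HL2 HL3 _ _ lt (ltn_ord u) nvu.
        exists w; split; first by []. by split; rewrite cdC.
      * by move: uv; rewrite (val_inj eq) eqxx.
    exists u, (Ordinal wn), v; split.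
    * by rewrite /add_edge; apply/orP; left; apply/orP; left.
    * by rewrite /add_edge; apply/orP; left; apply/orP; left.
    * by rewrite /add_edge !eqxx /= orbT.
Qed.
End G.

Theorem theorem1p1 : exists n0 : nat, forall n : nat, n0 <= n ->
  exists e : rel 'I_n, [/\ simple_graph e, regular e & K3_saturated e].
Proof.
exists 100; case=> [|m] hm; first by [].
exists (E m ((m.+1 + 10) %/ 8)); apply: E_main; lia.
Qed.
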